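(* Let $\mathcal{G}=(\mathcal{V},E)$ be an undirected graph, $\mathcal{V}=\{1,\dots,N\}$, and let $X=(X_1,\dots,X_N)$ be a Markov random field on $\mathcal{G}$ with each $X_i$ taking values in a finite alphabet $\mathcal{X}_i$. Let $g_i:\mathcal{X}_i\to\mathcal{Y}_i$ be functions and $Y_i=g_i(X_i)$, $Y=(Y_1,\dots,Y_N)$. If for every $i\in\mathcal{V}$ $$H(Y_i\mid Y_{\mathcal{N}_i})=H(Y_i\mid X_{\mathcal{N}_i}),$$ then $Y$ is a Markov random field on $\mathcal{G}$.
   Context: $\mathcal{N}_i=\{j\neq i:\{i,j\}\in E\}$; for $A\subseteq\mathcal{V}$, $X_A=(X_j,j\in A)$. $X$ is a Markov random field on $\mathcal{G}$ if for every $i$, $p_{X_i|X_{\mathcal{V}\setminus\{i\}}}=p_{X_i|X_{\mathcal{N}_i}}$. $H$ denotes Shannon (conditional) entropy. *)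

(* Defs.v *)
From HB Require Import structures.
From mathcomp Require Import all_boot all_order all_algebra.
From mathcomp Require Import reals exp.
Set Implicit Arguments. Unset Strict Implicit. Unset Printing Implicit Defensive.
Import Order.TTheory GRing.Theory Num.Theory.
Local Open Scope ring_scope.

Definition is_pmf (R : realType) (Om : finType) (P : Om -> R) : Prop :=
  (forall w, 0 <= P w) /\ \sum_(w : Om) P w = 1.

Definition Pr (R : realType) (Om : finType) (P : Om -> R) (A : {set Om}) : R :=
  \sum_(w in A) P w.

Definition cPr (R : realType) (Om : finType) (P : Om -> R) (A B : {set Om}) : R :=
  Pr P (A :&: B) / Pr P B.

Definition ev (N : nat) (Om : finType) (T : 'I_N -> eqType)
  (Z : forall j : 'I_N, Om -> T j) (S : {set 'I_N}) (w0 : Om) : {set Om} :=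
  [set w | [forall j in S, Z j w == Z j w0]].

Definition nbhd (N : nat) (e : rel 'I_N) (i : 'I_N) : {set 'I_N} :=
  [set j | (j != i) && e i j].

(* Z is a Markov random field on the graph (V = 'I_N, e):
   for every i, p_{Z_i | Z_{V \ {i}}} = p_{Z_i | Z_{N_i}}, i.e. for every
   conditioning value of positive probability and every value a of Z_i,
   P(Z_i = a | Z_{V\{i}} = z) = P(Z_i = a | Z_{N_i} = z_{N_i}). *)
Definition MRF (R : realType) (N : nat) (Om : finType) (P : Om -> R)
  (e : rel 'I_N) (T : 'I_N -> eqType) (Z : forall j : 'I_N, Om -> T j) : Prop :=
  forall (i : 'I_N) (w0 : Om), 0 < Pr P (ev Z (~: [set i]) w0) ->
    forall a : T i,
      cPr P [set w | Z i w == a] (ev Z (~: [set i]) w0)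
      = cPr P [set w | Z i w == a] (ev Z (nbhd e i) w0).

(* Shannon conditional entropy H(U | Z_S) (natural log), written as the
   expectation E[- log p(U | Z_S)] = - sum_w P(w) log P(U = U(w) | Z_S = Z_S(w)). *)
Definition condH (R : realType) (N : nat) (Om : finType) (P : Om -> R)
  (A : eqType) (U : Om -> A) (T : 'I_N -> eqType) (Z : forall j : 'I_N, Om -> T j)
  (S : {set 'I_N}) : R :=
  - \sum_(w : Om) P w * ln (cPr P [set w' | U w' == U w] (ev Z S w)).

(* Main.v *)
Require Import Defs.
From HB Require Import structures.
From mathcomp Require Import all_boot all_order all_algebra.
From mathcomp Require Import reals exp.
From mathcomp Require Import ring lra.
Set Implicit Arguments. Unset Strict Implicit. Unset Printing Implicit Defensive.
Import Order.TTheory GRing.Theory Num.Theory.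
Local Open Scope ring_scope.

Section Gen.
Variables (R : realType) (Om : finType) (P : Om -> R).
Hypothesis P0 : forall w, 0 <= P w.
Hypothesis P1 : \sum_w P w = 1.

Lemma PrE (A : {set Om}) : Pr P A = \sum_w (w \in A)%:R * P w.
Proof.
rewrite /Pr big_mkcond; apply: eq_bigr => w _.
by case: (w \in A); rewrite ?mul1r ?mul0r.
Qed.

Lemma Pr_ge0 (A : {set Om}) : 0 <= Pr P A.
Proof. by apply: sumr_ge0. Qed.

Lemma Pr_sub (A B : {set Om}) : A \subset B -> Pr P A <= Pr P B.
Proof.
move=> sAB; rewrite !PrE; apply: ler_sum => w _.
case: (boolP (w \in A)) => wA; first by rewrite (subsetP sAB _ wA).
by rewrite mul0r; case: (w \in B); rewrite ?mul1r ?mul0r.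
Qed.

Lemma Pr_pos (A : {set Om}) w : w \in A -> 0 < P w -> 0 < Pr P A.
Proof.
move=> wA Pw; rewrite /Pr (bigD1 w) //=; apply: (lt_le_trans Pw).
by rewrite lerDl; apply: sumr_ge0.
Qed.

Lemma Pr_exists (A : {set Om}) : 0 < Pr P A -> exists2 w, w \in A & 0 < P w.
Proof.
case: (pickP [pred w | (w \in A) && (0 < P w)]) => [w /andP[]|H]; first by eauto.
have -> : Pr P A = 0.
  apply: big1 => w wA; have := H w; rewrite /= wA /= => /negbT.
  by rewrite -leNgt => h; apply/eqP; rewrite eq_le h P0.
by rewrite ltxx.
Qed.

Lemma ratio01 (x : R) : x / x = 0 \/ x / x = 1.
Proof. by case: (eqVneq x 0) => [->|h]; [left; rewrite mul0r | right; rewrite divff]. Qed.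

Lemma ratio_le1 (x : R) : x / x <= 1.
Proof. by case: (ratio01 x) => ->. Qed.

Lemma ratio_ge0 (x : R) : 0 <= x / x.
Proof. by case: (ratio01 x) => ->. Qed.

Lemma tower (D : Om -> {set Om}) (E F : {set Om}) :
  (forall w, w \in D w) -> (forall w v, v \in D w -> D v = D w) ->
  (forall u v, u \in E -> v \in D u -> v \in E) ->
  Pr P (F :&: E) = \sum_v (v \in E)%:R * P v * cPr P F (D v).
Proof.
move=> Dself Deq EC.
have Dsym w v : v \in D w -> w \in D v by move=> h; rewrite (Deq _ _ h) Dself.
rewrite /cPr.
under eq_bigr => v _ do rewrite PrE big_distrl big_distrr /=.
rewrite exchange_big PrE /=; apply: eq_bigr => u _.
transitivity (\sum_v (u \in F :&: E)%:R * P u * ((v \in D u)%:R * P v / Pr P (D u))).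
  rewrite -big_distrr /= -big_distrl /= -PrE.
  case: (boolP (u \in F :&: E)) => hu; last by rewrite !mul0r.
  have [Pu0|Pupos] := eqVneq (P u) 0; first by rewrite Pu0 !mulr0 mul0r.
  have Pupos' : 0 < P u by rewrite lt_def Pupos P0.
  by rewrite divff ?mulr1 // gt_eqF // (Pr_pos (Dself u)).
apply: eq_bigr => v _.
case: (boolP (v \in D u)) => hv.
  have hu : u \in D v by apply: Dsym.
  have hE : (v \in E) = (u \in E).
    by apply/idP/idP => h; [apply: EC h hu | apply: EC h hv].
  rewrite !inE hu andbT (Deq _ _ hv) hE.
  by case: (u \in F); case: (u \in E) => /=; ring.
rewrite !inE; have -> : (u \in D v) = false by apply/negbTE; apply: contra hv; apply: Dsym.
by rewrite andbF /=; ring.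
Qed.


Lemma decomp (F : finType) (Tt : eqType) (Z : Om -> F) (h : F -> Tt) (a : Tt) (B : {set Om}) :
  cPr P [set w | h (Z w) == a] B = \sum_(b : F) (h b == a)%:R * cPr P [set w | Z w == b] B.
Proof.
rewrite /cPr; under eq_bigr => b _ do rewrite mulrA.
rewrite -big_distrl /=; congr (_ / _).
rewrite PrE; under eq_bigr => b _ do rewrite PrE big_distrr /=.
rewrite exchange_big /=; apply: eq_bigr => w _.
rewrite (bigD1 (Z w)) //= big1 ?addr0.
  by rewrite !inE eqxx /=; case: (h (Z w) == a); case: (w \in B) => /=; ring.
move=> b hb; rewrite !inE.
have -> : (Z w == b) = false by rewrite eq_sym; apply/negbTE.
by rewrite /=; ring.
Qed.

Section Core.
Variables (Tt : eqType) (U : Om -> Tt) (BX BY : Om -> {set Om}).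
Hypothesis BXself : forall w, w \in BX w.
Hypothesis BYself : forall w, w \in BY w.
Hypothesis BXeq : forall w v, v \in BX w -> BX v = BX w.
Hypothesis BYeq : forall w v, v \in BY w -> BY v = BY w.
Hypothesis BXY : forall w, BX w \subset BY w.
Local Notation A w := [set w' | U w' == U w].
Local Notation p w := (cPr P (A w) (BY w)).
Local Notation q w := (cPr P (A w) (BX w)).

Lemma S_eq : \sum_w P w * (p w / q w) =
  \sum_u \sum_v P u * P v * (v \in BY u)%:R / Pr P (BY u) *
     (Pr P (A v :&: BX u) / Pr P (A v :&: BX u)).
Proof.
have BXsym w v : v \in BX w -> w \in BX v by move=> h; rewrite (BXeq h) BXself.
have key w u v : ((u \in BX w) && (v \in A w :&: BY w)) =
                 ((w \in A v :&: BX u) && (v \in BY u)).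
  rewrite !inE; case: (boolP (u \in BX w)) => hu /=.
    rewrite (BXsym _ _ hu) (BYeq (subsetP (BXY w) _ hu)) andbT eq_sym.
    by [].
  have -> : (w \in BX u) = false by apply/negbTE; apply: contra hu; apply: BXsym.
  by rewrite andbF.
transitivity (\sum_w \sum_u \sum_v P w * ((u \in BX w)%:R * P u) *
   ((v \in A w :&: BY w)%:R * P v) / (Pr P (BY w) * Pr P (A w :&: BX w))).
  apply: eq_bigr => w _.
  transitivity (P w * (Pr P (BX w) * Pr P (A w :&: BY w)) / (Pr P (BY w) * Pr P (A w :&: BX w))).
    by rewrite /cPr !invfM invrK; ring.
  rewrite (PrE (BX w)) (PrE (A w :&: BY w)) big_distrl /= big_distrr /= big_distrl /=.
  apply: eq_bigr => u _.
  rewrite big_distrr /= big_distrr /= big_distrl /=.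
  by apply: eq_bigr => v _; ring.
transitivity (\sum_w \sum_u \sum_v P u * P v * (v \in BY u)%:R * ((w \in A v :&: BX u)%:R * P w)
    / (Pr P (BY u) * Pr P (A v :&: BX u))).
  apply: eq_bigr => w _; apply: eq_bigr => u _; apply: eq_bigr => v _.
  have k := key w u v.
  case hu: (u \in BX w); case hv: (v \in A w :&: BY w); rewrite hu hv /= in k;
    last 3 first.
  - by case: (w \in A v :&: BX u) (v \in BY u) k => [] [] /= k; try discriminate; ring.
  - by case: (w \in A v :&: BX u) (v \in BY u) k => [] [] /= k; try discriminate; ring.
  - by case: (w \in A v :&: BX u) (v \in BY u) k => [] [] /= k; try discriminate; ring.
  move/esym/andP: k => [hw hv']; rewrite hw hv'.
  move: hv; rewrite !inE => /andP[hvA hvB].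
  have -> : A v = A w by apply/setP => x; rewrite !inE (eqP hvA).
  rewrite (BXeq hu) (BYeq (subsetP (BXY w) _ hu)) /=; ring.
rewrite exchange_big /=; apply: eq_bigr => u _.
rewrite exchange_big /=; apply: eq_bigr => v _.
rewrite -big_distrl /= -big_distrr /= -PrE invfM; ring.
Qed.


Lemma sumK : \sum_u \sum_v P u * P v * (v \in BY u)%:R / Pr P (BY u) = 1.
Proof.
transitivity (\sum_u P u); last exact: P1.
apply: eq_bigr => u _.
transitivity (\sum_v (P u / Pr P (BY u)) * ((v \in BY u)%:R * P v)).
  by apply: eq_bigr => v _; ring.
rewrite -big_distrr /= -PrE.
have [->|hu] := eqVneq (P u) 0; first by rewrite !mul0r.
have hu' : 0 < P u by rewrite lt_def hu P0.
rewrite -mulrA mulVf ?mulr1 //; apply: lt0r_neq0; exact: Pr_pos (BYself u) hu'.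
Qed.

Lemma K_ge0 u v : 0 <= P u * P v * (v \in BY u)%:R / Pr P (BY u).
Proof. by rewrite !mulr_ge0 ?invr_ge0 ?Pr_ge0 ?ler0n. Qed.

Lemma core_eq :
  \sum_w P w * ln (p w) = \sum_w P w * ln (q w) ->
  forall u, 0 < P u -> forall a : Tt,
  cPr P [set w | U w == a] (BX u) = cPr P [set w | U w == a] (BY u).
Proof.
move=> Heq.
have hpos w : 0 < P w -> 0 < p w /\ 0 < q w.
  move=> hw; have wA : w \in A w by rewrite inE.
  split; apply: divr_gt0.
  - by apply: (Pr_pos _ hw); rewrite inE wA BYself.
  - exact: Pr_pos (BYself w) hw.
  - by apply: (Pr_pos _ hw); rewrite inE wA BXself.
  - exact: Pr_pos (BXself w) hw.
have hS1 : \sum_w P w * (p w / q w) <= 1.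
  rewrite S_eq -[X in _ <= X]sumK; apply: ler_sum => u _; apply: ler_sum => v _.
  by rewrite -[X in _ <= X]mulr1; apply: (ler_wpM2l (K_ge0 u v)); apply: ratio_le1.
pose D w := P w * (p w / q w - 1 - (ln (p w) - ln (q w))).
have hD w : 0 <= D w.
  rewrite /D; have [->|hw] := eqVneq (P w) 0; first by rewrite mul0r.
  have hw' : 0 < P w by rewrite lt_def hw P0.
  have [hp hq] := hpos w hw'.
  apply: mulr_ge0; first exact: P0.
  have hr : 0 < p w / q w by apply: divr_gt0.
  have := expR_ge1Dx (ln (p w / q w)); rewrite lnK ?posrE // ln_div ?posrE //.
  by move=> h; lra.
have sD : \sum_w D w = \sum_w P w * (p w / q w) - 1.
  have -> : \sum_w D w = \sum_w (P w * (p w / q w) - P w) -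
                         (\sum_w P w * ln (p w) - \sum_w P w * ln (q w)).
    by rewrite -!sumrB; apply: eq_bigr => w _; rewrite /D; ring.
  by rewrite Heq subrr subr0 sumrB P1.
have D0 : \sum_w D w = 0.
  by apply/eqP; rewrite eq_le sumr_ge0 // sD andbT; lra.
have hpq w : 0 < P w -> p w = q w.
  move=> hw'; have [hp hq] := hpos w hw'.
  have := psumr_eq0P (fun w _ => hD w) D0 (i := w) isT; rewrite /D.
  move/eqP; rewrite mulf_eq0 gt_eqF //= => /eqP.
  have hr : 0 < p w / q w by apply: divr_gt0.
  rewrite -ln_div ?posrE //.
  have [r1|rn1] := eqVneq (p w / q w) 1.
    by move=> _; rewrite -(divfK (lt0r_neq0 hq) (p w)) r1 mul1r.
  have hl : ln (p w / q w) != 0 by rewrite ln_eq0.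
  have := expR_gt1Dx hl; rewrite lnK ?posrE // => h1 h2; lra.
have hS : \sum_w P w * (p w / q w) = 1.
  rewrite -P1; apply: eq_bigr => w _.
  have [->|hw] := eqVneq (P w) 0; first by rewrite mul0r.
  have hw' : 0 < P w by rewrite lt_def hw P0.
  have [_ hq] := hpos w hw'.
  by rewrite hpq // divff ?mulr1 // gt_eqF.
have slack : \sum_u \sum_v (P u * P v * (v \in BY u)%:R / Pr P (BY u) *
    (1 - Pr P (A v :&: BX u) / Pr P (A v :&: BX u))) = 0.
  transitivity ((\sum_u \sum_v P u * P v * (v \in BY u)%:R / Pr P (BY u)) -
     \sum_u \sum_v P u * P v * (v \in BY u)%:R / Pr P (BY u) *
     (Pr P (A v :&: BX u) / Pr P (A v :&: BX u))).
    rewrite -sumrB; apply: eq_bigr => u _; rewrite -sumrB; apply: eq_bigr => v _; ring.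
  by rewrite sumK -S_eq hS subrr.
have slack_ge0 u v : 0 <= P u * P v * (v \in BY u)%:R / Pr P (BY u) *
    (1 - Pr P (A v :&: BX u) / Pr P (A v :&: BX u)).
  by apply: mulr_ge0; [apply: K_ge0 | rewrite subr_ge0 ratio_le1].
have slack0 u v : P u * P v * (v \in BY u)%:R / Pr P (BY u) *
    (1 - Pr P (A v :&: BX u) / Pr P (A v :&: BX u)) = 0.
  have := psumr_eq0P (fun u _ => sumr_ge0 _ (fun v _ => slack_ge0 u v)) slack (i := u) isT.
  by move=> h; apply: (psumr_eq0P (fun v _ => slack_ge0 u v) h (i := v) isT).
move=> u hu a.
have hsub : [set w | U w == a] :&: BX u \subset [set w | U w == a] :&: BY u.
  by apply: setIS; apply: BXY.
have [h0|hne] := eqVneq (Pr P ([set w | U w == a] :&: BY u)) 0.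
  have h0' : Pr P ([set w | U w == a] :&: BX u) = 0.
    by apply/eqP; rewrite eq_le Pr_ge0 andbT -h0 Pr_sub.
  by rewrite /cPr h0 h0' !mul0r.
have hgt : 0 < Pr P ([set w | U w == a] :&: BY u) by rewrite lt_def hne Pr_ge0.
have [v hv hPv] := Pr_exists hgt.
move: hv; rewrite !inE => /andP[/eqP hva hvB].
have hK : P u * P v * (v \in BY u)%:R / Pr P (BY u) != 0.
  rewrite hvB /= mulr1 !mulf_neq0 ?gt_eqF ?invr_gt0 //.
  exact: Pr_pos (BYself u) hu.
have := slack0 u v; move/eqP; rewrite mulf_eq0 (negbTE hK) /= subr_eq0 => /eqP hr.
have hne2 : Pr P (A v :&: BX u) != 0.
  by apply/eqP => h; move: hr; rewrite h mul0r => /eqP; rewrite oner_eq0.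
have hgt2 : 0 < Pr P (A v :&: BX u) by rewrite lt_def hne2 Pr_ge0.
have [w hw hPw] := Pr_exists hgt2.
move: hw; rewrite !inE => /andP[/eqP hwv hwB].
have := hpq w hPw.
have -> : A w = [set w | U w == a] by apply/setP => x; rewrite !inE hwv hva.
rewrite (BXeq hwB) (BYeq (subsetP (BXY u) _ hwB)) => ->.
by [].
Qed.
End Core.

End Gen.

Section Ev.
Variables (N : nat) (Om : finType) (T : 'I_N -> eqType) (Z : forall j : 'I_N, Om -> T j).

Lemma ev_self (S : {set 'I_N}) w : w \in ev Z S w.
Proof. by rewrite inE; apply/forallP => j; apply/implyP => _. Qed.

Lemma ev_eq (S : {set 'I_N}) w v : v \in ev Z S w -> ev Z S v = ev Z S w.
Proof.
rewrite inE => /forallP hv; apply/setP => x; rewrite !inE.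
apply/idP/idP => /forallP h; apply/forallP => j; apply/implyP => jS.
  by move: (implyP (h j) jS) (implyP (hv j) jS) => /eqP -> /eqP ->.
by move: (implyP (h j) jS) (implyP (hv j) jS) => /eqP -> /eqP ->.
Qed.

Lemma ev_sub (S S' : {set 'I_N}) w : S' \subset S -> ev Z S w \subset ev Z S' w.
Proof.
move=> sS; apply/subsetP => x; rewrite !inE => /forallP h.
by apply/forallP => j; apply/implyP => jS; apply: (implyP (h j)); apply: (subsetP sS).
Qed.

Lemma ev_comp (T' : 'I_N -> eqType) (g : forall j, T j -> T' j) (S : {set 'I_N}) w :
  ev Z S w \subset ev (fun j w => g j (Z j w)) S w.
Proof.
apply/subsetP => x; rewrite !inE => /forallP h.
by apply/forallP => j; apply/implyP => jS; move: (implyP (h j) jS) => /eqP ->.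
Qed.
End Ev.

Theorem proposition2 (R : realType) (N : nat) (e : rel 'I_N) (e_sym : symmetric e)
  (Om : finType) (P : Om -> R) (hP : is_pmf P)
  (Xa : 'I_N -> finType) (X : forall i : 'I_N, Om -> Xa i)
  (Ya : 'I_N -> eqType) (g : forall i : 'I_N, Xa i -> Ya i) :
  MRF P e X ->
  (forall i : 'I_N,
     condH P (fun w => g i (X i w)) (fun j w => g j (X j w)) (nbhd e i)
     = condH P (fun w => g i (X i w)) X (nbhd e i)) ->
  MRF P e (fun j w => g j (X j w)).
Proof.
move=> hX hH; have [P0 P1] := hP.
move=> i w0 hpos a.
have Heq := oppr_inj (hH i).
have nsub : nbhd e i \subset ~: [set i].
  by apply/subsetP => j; rewrite !inE => /andP[].
have core := core_eq P0 P1 (U := fun w => g i (X i w))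
  (BX := ev X (nbhd e i)) (BY := ev (fun j w => g j (X j w)) (nbhd e i))
  (@ev_self _ _ _ X _) (@ev_self _ _ _ _ _) (@ev_eq _ _ _ X _) (@ev_eq _ _ _ _ _)
  (fun w => ev_comp X g (nbhd e i) w) Heq.
set Y := fun (j : 'I_N) (w : Om) => g j (X j w).
set E := ev Y (~: [set i]) w0.
set Aa := [set w | g i (X i w) == a].
set c := cPr P Aa (ev Y (nbhd e i) w0).
have hE : 0 < Pr P E by [].
rewrite -/c /cPr.
suff -> : Pr P (Aa :&: E) = c * Pr P E by rewrite mulfK // lt0r_neq0.
have EC u v : u \in E -> v \in ev X (~: [set i]) u -> v \in E.
  move=> uE vD; rewrite /E -(ev_eq uE).
  exact: (subsetP (ev_comp X g _ u)).
rewrite (tower P0 Aa (@ev_self _ _ _ X _) (@ev_eq _ _ _ X _) EC).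
rewrite PrE big_distrr /=; apply: eq_bigr => v _.
case: (boolP (v \in E)) => vE; last by rewrite !mul0r mulr0.
have [->|hv] := eqVneq (P v) 0; first by rewrite mulr0 mul0r mulr0.
have hv' : 0 < P v by rewrite lt_def hv P0.
suff -> : cPr P Aa (ev X (~: [set i]) v) = c by ring.
rewrite /Aa (decomp P (X i) (g i)).
have hDpos : 0 < Pr P (ev X (~: [set i]) v) by apply: (Pr_pos P0 (ev_self X (~: [set i]) v) hv').
under eq_bigr => b _ do rewrite (hX i v hDpos b).
rewrite -(decomp P (X i) (g i)) (core v hv' a) /c.
congr (cPr P _ _); apply: ev_eq.
exact: (subsetP (ev_sub Y w0 nsub)).
Qed.
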